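(* Let $W$ and $A$ be finite sets and $\alpha\colon W\times A\to\Delta_W$ a Markov kernel. Let $f_\alpha\colon\Delta_{W\times A}\to\Delta_{W\times W}$ be the linear map $p(w,a)\mapsto\sum_a p(w,a)\alpha(w'|w,a)$, let $\Xi=\{q\in\Delta_{W\times W}\colon \sum_{w'}q(\cdot,w')=\sum_{w}q(w,\cdot)\}$ be the polytope of joint distributions with equal first and second marginals, and let $J=f_\alpha^{-1}(\Xi)\subseteq\Delta_{W\times A}$. Then each extreme point of $J$ can be written as $p(w,a)=p(w)p(a|w)$, where $p(w)\in\Delta_W$ and $p(a|w)$ is an extreme point of $\Delta_{W,A}$.
   Context: $\Delta_X$ denotes the probability simplex of distributions on a finite set $X$. $\Delta_{W,A}=\prod_{w\in W}\Delta_A$ denotes the polytope of Markov kernels (conditional distributions) $p(a|w)$ from $W$ to $A$; its extreme points are the deterministic kernels $p(a|w)=\delta_{f(w)}(a)$ for functions $f\colon W\to A$. *)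

(* Defs.v *)
From mathcomp Require Import all_boot all_order all_algebra.
From mathcomp Require Import reals.
Set Implicit Arguments. Unset Strict Implicit. Unset Printing Implicit Defensive.
Import Order.TTheory GRing.Theory Num.Theory.
Local Open Scope ring_scope.

Definition simplex (R : realType) (X : finType) (p : X -> R) : Prop :=
  (forall x, 0 <= p x) /\ \sum_(x : X) p x = 1.

(* Polytope Delta_{W,A} of Markov kernels p(a|w), encoded as k (w, a). *)
Definition kernel_polytope (R : realType) (W A : finType) (k : W * A -> R) : Prop :=
  forall w : W, simplex (fun a : A => k (w, a)).

Definition extreme_point (R : realType) (X : Type) (S : (X -> R) -> Prop)
  (p : X -> R) : Prop :=
  S p /\
  forall (q r : X -> R) (t : R), S q -> S r -> 0 < t < 1 ->
    p = (fun x => t * q x + (1 - t) * r x) -> q = p /\ r = p.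

(* The linear map f_alpha : p(w,a) |-> sum_a p(w,a) alpha(w'|w,a), alpha w a w' = alpha(w'|w,a). *)
Definition f_alpha (R : realType) (W A : finType) (alpha : W -> A -> W -> R)
  (p : W * A -> R) : W * W -> R :=
  fun ww => \sum_(a : A) p (ww.1, a) * alpha ww.1 a ww.2.

Definition Xi (R : realType) (W : finType) (q : W * W -> R) : Prop :=
  simplex q /\
  forall w : W, \sum_(w' : W) q (w, w') = \sum_(w0 : W) q (w0, w).

Definition J (R : realType) (W A : finType) (alpha : W -> A -> W -> R)
  (p : W * A -> R) : Prop :=
  simplex p /\ Xi (f_alpha alpha p).

(* Main.v *)
Require Import Defs.
From mathcomp Require Import all_boot all_order all_algebra.
From mathcomp Require Import reals.
From mathcomp Require Import zify ring lra.
From Stdlib Require Import FunctionalExtensionality.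
Set Implicit Arguments. Unset Strict Implicit. Unset Printing Implicit Defensive.
Import Order.TTheory GRing.Theory Num.Theory.
Local Open Scope ring_scope.

Lemma kernel_exists (R : fieldType) (X C : finType) (P : {set X}) (Q : {set C})
  (c : X -> C -> R) :
  (#|Q| < #|P|)%N -> exists d : X -> R, (forall x, x \notin P -> d x = 0) /\
   (exists x, d x != 0) /\ forall j, j \in Q -> \sum_x d x * c x j = 0.
Proof.
move=> hQP.
pose M : 'M[R]_(#|P|, #|Q|) := \matrix_(i, j) c (enum_val i) (enum_val j).
pose v := nz_row (kermx M).
have vM : v *m M = 0 by apply/eqP; rewrite -sub_kermx nz_row_sub.
have vnz : v != 0.
  rewrite nz_row_eq0 -mxrank_eq0 mxrank_ker; apply/eqP => h.
  have := rank_leq_col M; move: h hQP; lia.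
pose d x := \sum_(i | enum_val i == x) v 0 i.
exists d; split; [|split].
- move=> x xP; apply: big_pred0 => i; apply/eqP => e.
  by move: xP; rewrite -e enum_valP.
- have [i vi] : exists i, v 0 i != 0.
    apply/existsP; apply: contraR vnz; rewrite negb_exists => /forallP h.
    apply/eqP/rowP => i; rewrite mxE; exact/eqP/negbNE/h.
  exists (enum_val i); rewrite /d (eq_bigl (pred1 i)) ?big_pred1_eq //.
  by move=> i' /=; rewrite (inj_eq enum_val_inj).
- move=> j jQ.
  have := congr1 (fun m : 'M[R]_(1, #|Q|) => m 0 (enum_rank_in jQ j)) vM.
  rewrite !mxE => h; rewrite -[RHS]h.
  rewrite (partition_big enum_val xpredT) //=.
  apply: eq_bigr => x _; rewrite /d mulr_suml; apply: eq_bigr => i /eqP ei.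
  by rewrite mxE ei enum_rankK_in.
Qed.

Section Aux.
Variables (R : realType) (W A : finType) (alpha : W -> A -> W -> R).
Hypothesis halpha : forall (w : W) (a : A), simplex (alpha w a).

Lemma sum_pair (I J : finType) (G : I * J -> R) : \sum_x G x = \sum_v \sum_a G (v, a).
Proof. by rewrite pair_bigA; apply: eq_bigr => -[]. Qed.

Lemma rowsum (q : W * A -> R) w :
  \sum_w' f_alpha alpha q (w, w') = \sum_a q (w, a).
Proof.
rewrite /f_alpha /= exchange_big; apply: eq_bigr => a _.
by rewrite -mulr_sumr (halpha w a).2 mulr1.
Qed.

Lemma colsum (q : W * A -> R) w :
  \sum_w0 f_alpha alpha q (w0, w) = \sum_x q x * alpha x.1 x.2 w.
Proof. by rewrite sum_pair. Qed.

Definition flow (q : W * A -> R) :=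
  forall w, \sum_a q (w, a) = \sum_x q x * alpha x.1 x.2 w.

Lemma J_flow q : J alpha q -> flow q.
Proof. by move=> [_ [_ h]] w; rewrite -rowsum h colsum. Qed.

Lemma J_intro q : (forall x, 0 <= q x) -> \sum_x q x = 1 -> flow q -> J alpha q.
Proof.
move=> h0 h1 hf; split; first by split.
split; last by move=> w; rewrite rowsum colsum hf.
split.
  move=> [w w']; rewrite /f_alpha /=; apply: sumr_ge0 => a _.
  by apply: mulr_ge0 => //; apply: (halpha _ _).1.
by rewrite sum_pair -h1 sum_pair; apply: eq_bigr => w _; rewrite rowsum.
Qed.

Lemma flow_comb p d lam : flow p -> flow d -> flow (fun x => p x + lam * d x).
Proof.
move=> hp hd w; rewrite big_split /= -mulr_sumr hp hd mulr_sumr -big_split /=.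
by apply: eq_bigr => x _; rewrite mulrDl mulrA.
Qed.


Lemma uniq_action p : extreme_point (J alpha) p ->
  forall w a1 a2, p (w, a1) != 0 -> p (w, a2) != 0 -> a1 = a2.
Proof.
move=> hp w a1 a2 p1 p2; case: (eqVneq a1 a2) => // ne; exfalso.
have hJ := hp.1; have [hp0 hp1] := hJ.1; have hpf := J_flow hJ.
pose S := [set v | [exists a, p (v, a) != 0]].
pose P := [set x | p x != 0].
pose c (x : W * A) (j : W) : R :=
  if j == w then 1 else ((x.1 == j)%:R - alpha x.1 x.2 j).
have card : (#|S| < #|P|)%N.
  pose g v := (v, if v == w then a1 else odflt a1 [pick a | p (v, a) != 0]).
  have ginj : injective g by move=> u v [].
  rewrite -(card_imset _ ginj); apply: proper_card; apply/properP; split.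
    apply/subsetP => x /imsetP [v vS ->]; rewrite inE /g.
    case: ifP => [/eqP ->|_] //; move: vS; rewrite inE => /existsP [a pa].
    by case: pickP => [b pb|/(_ a)] //=; rewrite pa.
  exists (w, a2); first by rewrite inE.
  apply/imsetP => -[v _ [ev ea]]; subst v; rewrite eqxx in ea.
  by rewrite ea eqxx in ne.
have [d [dP [[x0 dx0] dk]]] := kernel_exists c card.
have wS : w \in S by rewrite inE; apply/existsP; exists a1.
have dsum : \sum_x d x = 0.
  by rewrite -[RHS](dk w wS); apply: eq_bigr => x _; rewrite /c eqxx mulr1.
have dz x : p x == 0 -> d x = 0 by move=> px; apply: dP; rewrite inE px.
have dflow' : forall j, j != w ->
    \sum_a d (j, a) = \sum_x d x * alpha x.1 x.2 j.
  move=> j jw; case: (boolP (j \in S)) => jS.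
    have := dk j jS; rewrite /c (negbTE jw).
    under eq_bigr do rewrite mulrBr.
    rewrite sumrB => /eqP; rewrite subr_eq0 => /eqP <-.
    rewrite [RHS]sum_pair (bigD1 j) //= [X in _ + X]big1 ?addr0 => [|v /negbTE vj].
      by apply: eq_bigr => a _; rewrite eqxx mulr1.
    by apply: big1 => a _; rewrite vj mulr0.
  have pj a : p (j, a) = 0.
    by apply/eqP; move: jS; rewrite inE negb_exists => /forallP /(_ a)/negPn.
  rewrite big1 => [|a _]; last by apply: dz; rewrite pj.
  have h0 : \sum_x p x * alpha x.1 x.2 j = 0.
    by rewrite -hpf big1.
  symmetry; apply: big1 => x _.
  case: (eqVneq (p x) 0) => [/eqP/dz -> | px]; first by rewrite mul0r.
  have := psumr_eq0P _ h0 (i := x) isT.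
  move=> /(_ _) /eqP; rewrite mulf_eq0 (negbTE px) /= => /(_ _)/eqP ->.
    by rewrite mulr0.
  by move=> y _; apply: mulr_ge0 => //; apply: (halpha _ _).1.
have dflow : flow d.
  move=> j; case: (eqVneq j w) => [->|]; last exact: dflow'.
  have tot : \sum_j (\sum_a d (j, a) - \sum_x d x * alpha x.1 x.2 j) = 0.
    rewrite sumrB -sum_pair exchange_big /=.
    rewrite [X in _ - X](eq_bigr (fun x => d x)) ?subrr // => x _.
    by rewrite -mulr_sumr (halpha _ _).2 mulr1.
  rewrite (bigD1 w) //= [X in _ + X]big1 ?addr0 in tot; last first.
    by move=> v vw; rewrite dflow' ?subrr.
  by move/eqP: tot; rewrite subr_eq0 => /eqP.
pose e := \big[Order.min/1]_(x | p x != 0) (p x / (1 + `|d x|)).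
have e0 : 0 < e.
  apply: lt_bigmin => // x px; apply: divr_gt0; last first.
    by apply: ltr_wpDr.
  by rewrite lt_def px hp0.
have ebound x : `|e * d x| <= p x.
  case: (eqVneq (p x) 0) => [px|px].
    by rewrite dz ?px // mulr0 normr0.
  have := @bigmin_le_cond _ _ _ 1 x (fun y => p y != 0) (fun x => p x / (1 + `|d x|)) px.
  rewrite -/e ler_pdivlMr; last by apply: ltr_wpDr.
  by rewrite normrM (gtr0_norm e0) => h; apply: le_trans h; apply: ler_wpM2l; [exact: ltW | lra].
have inJ lam : `|lam| <= e -> J alpha (fun x => p x + lam * d x).
  move=> hl; apply: J_intro => //.
  - move=> x; have := ebound x; rewrite normrM (gtr0_norm e0) => hb.
    have : `|lam * d x| <= p x.
      by apply: le_trans hb; rewrite normrM ler_wpM2r.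
    rewrite ler_norml => /andP [h1 h2]; lra.
  - by rewrite big_split /= hp1 -mulr_sumr dsum mulr0 addr0.
  - exact: flow_comb.
have hq := inJ e ltac:(by rewrite gtr0_norm).
have hr := inJ (- e) ltac:(by rewrite normrN gtr0_norm).
have ht : (0 < 1 / 2 :> R) && (1 / 2 < 1 :> R) by apply/andP; split; lra.
have hpe : p = (fun x => 1 / 2 * (p x + e * d x) + (1 - 1 / 2) * (p x + - e * d x)).
  by apply: functional_extensionality => x; field.
have [eq1 _] := hp.2 _ _ _ hq hr ht hpe.
have := congr1 (fun f => f x0) eq1 => /= h.
have /eqP : e * d x0 = 0 by lra.
by rewrite mulf_eq0 (negbTE dx0) orbF gt_eqF.
Qed.

End Aux.

Lemma det_side (R : realType) (W A : finType) (f : W -> A) (q r : W * A -> R) t :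
  kernel_polytope q -> kernel_polytope r -> 0 < t < 1 ->
  (forall x, (x.2 == f x.1)%:R = t * q x + (1 - t) * r x) ->
  q = (fun x => (x.2 == f x.1)%:R).
Proof.
move=> hq hr /andP [t0 t1] hk.
have qz w a : a != f w -> q (w, a) = 0.
  move=> ne; have := hk (w, a); rewrite /= (negbTE ne) /= mulr0n => h.
  have := (hq w).1 a; have := (hr w).1 a => r0 q0.
  have tq0 : 0 <= t * q (w, a) by apply: mulr_ge0 => //; exact: ltW.
  have tr0 : 0 <= (1 - t) * r (w, a) by apply: mulr_ge0 => //; lra.
  have /eqP : t * q (w, a) = 0 by lra.
  by rewrite mulf_eq0 gt_eqF //= => /eqP.
apply: functional_extensionality => -[w a] /=.
case: (eqVneq a (f w)) => [->|ne]; last by rewrite qz.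
have := (hq w).2; rewrite (bigD1 (f w)) //= big1 ?addr0 // => b.
exact: qz.
Qed.

Lemma det_extreme (R : realType) (W A : finType) (f : W -> A) :
  extreme_point (@kernel_polytope R W A) (fun x => (x.2 == f x.1)%:R).
Proof.
split.
  move=> w; split => [a|] /=; first by rewrite ler0n.
  rewrite (bigD1 (f w)) //= eqxx big1 ?addr0 // => b /negbTE ->//.
move=> q r t hq hr ht hk; split.
  by apply: (det_side hq hr ht) => x; exact: (congr1 (fun g => g x) hk).
apply: (det_side (t := 1 - t) hr hq).
  by move: ht => /andP [t0 t1]; apply/andP; split; lra.
by move=> x; rewrite (congr1 (fun g => g x) hk) /=; ring.
Qed.

Theorem lemma2 (R : realType) (W A : finType) (alpha : W -> A -> W -> R)
  (halpha : forall (w : W) (a : A), simplex (alpha w a))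
  (p : W * A -> R) (hp : extreme_point (J alpha) p) :
  exists (pw : W -> R) (k : W * A -> R),
    simplex pw /\ extreme_point (@kernel_polytope R W A) k /\
    forall (w : W) (a : A), p (w, a) = pw w * k (w, a).
Proof.
have hu := uniq_action halpha hp.
have [hp0 hp1] := hp.1.1.
have [x0 px0] : exists x, p x != 0.
  apply/existsP; apply: contraT; rewrite negb_exists => /forallP h.
  move: hp1; rewrite big1 => [/eqP|x _]; first by rewrite eq_sym oner_eq0.
  exact/eqP/negPn/h.
pose f w := odflt x0.2 [pick a | p (w, a) != 0].
have hz w a : a != f w -> p (w, a) = 0.
  move=> ne; case: (eqVneq (p (w, a)) 0) => // pa; exfalso; move: ne.
  rewrite /f; case: pickP => [b pb|/(_ a)] /=; last by rewrite pa.
  by rewrite (hu w a b pa pb) eqxx.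
exists (fun w => \sum_a p (w, a)), (fun x => (x.2 == f x.1)%:R).
split; [split|split].
- by move=> w; apply: sumr_ge0.
- by rewrite -hp1 [RHS]sum_pair.
- exact: det_extreme.
- move=> w a /=; case: (eqVneq a (f w)) => [->|ne]; last by rewrite hz // mulr0.
  rewrite mulr1 (bigD1 (f w)) //= big1 ?addr0 // => b; exact: hz.
Qed.
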